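(* Let $P$ be the non-symmetric operad of sets in which $P(n)$ is the set of all $n$-tuples $(f_1,\dots,f_n)$ of order-preserving continuous maps $f_i:[0,1)\to[0,1)$ such that whenever $i<j$ and $t_i,t_j\in[0,1)$ we have $f_i(t_i)<f_j(t_j)$; the identity is $\mathrm{id}_{[0,1)}\in P(1)$, and composition is $(f_1,\dots,f_n)\circ((f_1^1,\dots,f_1^{k_1}),\dots,(f_n^1,\dots,f_n^{k_n}))=(f_1f_1^1,\dots,f_1f_1^{k_1},\dots,f_nf_n^1,\dots,f_nf_n^{k_n})$. Then: (1) an element $g\in P(1)$ is constant (in the operadic sense below) if and only if the map $g:[0,1)\to[0,1)$ is constant; (2) an element $(f_1,\dots,f_n)\in P(n)$ is surjective (in the operadic sense below) if and only if the union of the images of $f_1,\dots,f_n$ is $[0,1)$. Moreover both statements remain true when $P$ is replaced by its reverse $\overline{P}$.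
   Context: For a non-symmetric operad of sets $Q$ (sets $Q(n)$, identity $\mathrm{id}\in Q(1)$, composition $\theta\circ(\theta_1,\dots,\theta_n)$): an element $\gamma\in Q(1)$ is called constant if for all $n\in\mathbb{N}$ and all $\phi,\phi'\in Q(n)$, $\gamma\circ(\phi)=\gamma\circ(\phi')$; an element $\phi\in Q(n)$ is called surjective if for all $\theta,\theta'\in Q(1)$, $\theta\circ(\phi)=\theta'\circ(\phi)$ implies $\theta=\theta'$. The reverse $\overline{Q}$ of $Q$ has $\overline{Q}(n)=Q(n)$, the same identity, and composition $\theta\circ_{\mathrm{rev}}(\theta_1,\dots,\theta_n)=\theta\circ(\theta_n,\dots,\theta_1)$. An element $(g)\in P(1)$ is written simply $g$. *)

(* Defs.v *)
From Stdlib Require Import Reals.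
From mathcomp Require Import all_boot.
Set Implicit Arguments.
Unset Strict Implicit.
Unset Printing Implicit Defensive.

Local Open Scope R_scope.

Definition I01 : Type := {x : R | 0 <= x < 1}.
Definition map01 : Type := I01 -> I01.

Definition order_preserving (f : map01) : Prop :=
  forall s t : I01, proj1_sig s <= proj1_sig t ->
    proj1_sig (f s) <= proj1_sig (f t).

Definition continuous01 (f : map01) : Prop :=
  forall (s : I01) (eps : R), 0 < eps ->
    exists delta : R, 0 < delta /\
      forall t : I01, Rabs (proj1_sig t - proj1_sig s) < delta ->
        Rabs (proj1_sig (f t) - proj1_sig (f s)) < eps.

Definition Ptup (n : nat) : Type := 'I_n -> map01.

Definition inP (n : nat) (phi : Ptup n) : Prop :=
  (forall i : 'I_n, order_preserving (phi i) /\ continuous01 (phi i)) /\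
  (forall i j : 'I_n, (i < j)%N ->
     forall ti tj : I01, proj1_sig (phi i ti) < proj1_sig (phi j tj)).

(** Operadic composition theta o (theta_1) for theta in arity 1 (the only
    composites the notions "constant"/"surjective" use): the single input
    is given as a family indexed by 'I_1; the result is
    (g f_1, ..., g f_n). *)
Definition compP (g : Ptup 1) (n : nat) (phis : 'I_1 -> Ptup n) : Ptup n :=
  fun i t => g ord0 (phis ord0 i t).

(** Composition in the reverse operad: theta o_rev (theta_1,...,theta_k)
    = theta o (theta_k,...,theta_1); here k = 1. *)
Definition compPrev (g : Ptup 1) (n : nat) (phis : 'I_1 -> Ptup n) : Ptup n :=
  compP g (fun j => phis (rev_ord j)).

Definition unary_comp : Type :=
  Ptup 1 -> forall n : nat, ('I_1 -> Ptup n) -> Ptup n.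

Definition op_constant (c : unary_comp) (gamma : Ptup 1) : Prop :=
  forall (n : nat) (phi phi' : Ptup n), inP phi -> inP phi' ->
    c gamma n (fun _ => phi) = c gamma n (fun _ => phi').

Definition op_surjective (c : unary_comp) (n : nat) (phi : Ptup n) : Prop :=
  forall theta theta' : Ptup 1, inP theta -> inP theta' ->
    c theta n (fun _ => phi) = c theta' n (fun _ => phi) -> theta = theta'.

Definition map_constant (g : Ptup 1) : Prop :=
  exists y : I01, forall t : I01, g ord0 t = y.

Definition images_cover (n : nat) (phi : Ptup n) : Prop :=
  forall y : I01, exists (i : 'I_n) (t : I01), phi i t = y.

(* Main.v *)
Require Import Defs.
From Stdlib Require Import Reals Lra ProofIrrelevance FunctionalExtensionality Classical.
From mathcomp Require Import all_boot.
Set Implicit Arguments.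
Local Open Scope R_scope.

Lemma I01_eq (a b : I01) : proj1_sig a = proj1_sig b -> a = b.
Proof.
destruct a as [a Ha], b as [b Hb]; simpl; intros ->; f_equal; apply proof_irrelevance.
Qed.

Lemma zero_pf : 0 <= 0 < 1. Proof. lra. Qed.
Definition zero01 : I01 := exist _ 0 zero_pf.

Lemma clamp_pf (s t : I01) (x : R) :
  0 <= Rmax (proj1_sig s) (Rmin x (proj1_sig t)) < 1.
Proof.
destruct s as [s Hs], t as [t Ht]; simpl.
unfold Rmax, Rmin; repeat destruct Rle_dec; lra.
Qed.
Definition clamp (s t : I01) (x : R) : I01 := exist _ _ (clamp_pf s t x).

Lemma clamp_lip (s t : I01) x y :
  Rabs (proj1_sig (clamp s t x) - proj1_sig (clamp s t y)) <= Rabs (x - y).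
Proof.
unfold clamp; simpl.
unfold Rmax, Rmin, Rabs; repeat (destruct Rle_dec || destruct Rcase_abs); lra.
Qed.

Lemma ivt01 (f : map01) (s t : I01) (y : R) :
  continuous01 f -> proj1_sig s < proj1_sig t ->
  proj1_sig (f s) < y -> y < proj1_sig (f t) ->
  exists u : I01, proj1_sig (f u) = y.
Proof.
intros Hc Hst H1 H2.
set F := fun x => proj1_sig (f (clamp s t x)) - y.
assert (Hs : clamp s t (proj1_sig s) = s).
{ apply I01_eq; simpl. unfold Rmax, Rmin; repeat destruct Rle_dec; lra. }
assert (Ht : clamp s t (proj1_sig t) = t).
{ apply I01_eq; simpl. unfold Rmax, Rmin; repeat destruct Rle_dec; lra. }
assert (HF : continuity F).
{ intros x. unfold continuity_pt, continue_in, limit1_in, limit_in; simpl.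
  unfold R_dist; intros eps Heps.
  destruct (Hc (clamp s t x) eps Heps) as [d [Hd Hd']].
  exists d; split; [lra|]. intros z [_ Hz].
  unfold F. replace (proj1_sig (f (clamp s t z)) - y - (proj1_sig (f (clamp s t x)) - y))
   with (proj1_sig (f (clamp s t z)) - proj1_sig (f (clamp s t x))) by ring.
  apply Hd'. eapply Rle_lt_trans; [apply clamp_lip|exact Hz]. }
destruct (IVT F (proj1_sig s) (proj1_sig t) HF Hst) as [z [_ Hz]].
- unfold F; rewrite Hs; lra.
- unfold F; rewrite Ht; lra.
- exists (clamp s t z). unfold F in Hz; lra.
Qed.

Lemma in_In (T : eqType) (x : T) (s : seq T) : x \in s -> List.In x s.
Proof.
elim: s => //= a s IH; rewrite in_cons => /orP [/eqP ->|/IH]; auto.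
Qed.

Lemma fold_min_gt (y : R) (l : list R) :
  (forall x, List.In x l -> y < x) -> y < 1 -> y < List.fold_right Rmin 1 l.
Proof.
induction l as [|a l IH]; simpl; intros H H1; auto.
unfold Rmin; destruct Rle_dec; auto.
Qed.

Lemma fold_min_le (l : list R) x : List.In x l -> List.fold_right Rmin 1 l <= x.
Proof.
induction l as [|a l IH]; simpl; [tauto|]. intros [->|H].
- apply Rmin_l.
- eapply Rle_trans; [apply Rmin_r|auto].
Qed.

Definition Tval (y0 b x : R) := Rmin x (Rmax y0 (2*x - b)).

Lemma T_pf (y0 b : R) (x : I01) : 0 <= y0 -> 0 <= Tval y0 b (proj1_sig x) < 1.
Proof.
destruct x as [x Hx]; simpl; unfold Tval, Rmin, Rmax; repeat destruct Rle_dec; lra.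
Qed.

Lemma id_inP : inP (fun _ : 'I_1 => (fun x : I01 => x)).
Proof.
split.
- intros _; split.
  + intros s t H; exact H.
  + intros s eps He; exists eps; split; auto.
- intros i j; rewrite (ord1 i) (ord1 j) ltnn //.
Qed.

Lemma T_inP (y0 : R) (b : R) (Hy : 0 <= y0) :
  inP (fun _ : 'I_1 => (fun x : I01 => exist _ _ (T_pf b x Hy) : I01)).
Proof.
split.
- intros _; split.
  + intros [s Hs] [t Ht]; simpl; unfold Tval, Rmin, Rmax; repeat destruct Rle_dec; lra.
  + intros [s Hs] eps He; exists (eps/2); split; [lra|].
    intros [t Ht]; simpl. intros H.
    unfold Tval, Rmin, Rmax in *; unfold Rabs in *;
      repeat (destruct Rle_dec || destruct Rcase_abs); lra.
- intros i j; rewrite (ord1 i) (ord1 j) ltnn //.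
Qed.

Lemma const_pf (c : I01) : inP (fun _ : 'I_1 => fun _ : I01 => c).
Proof.
split.
- intros _; split.
  + intros s t _; apply Rle_refl.
  + intros s eps He; exists 1; split; [lra|]. intros t _.
    rewrite Rminus_diag Rabs_R0; exact He.
- intros i j; rewrite (ord1 i) (ord1 j) ltnn //.
Qed.

Lemma part1 (g : Ptup 1) : inP g -> (op_constant compP g <-> map_constant g).
Proof.
intros Hg; split.
- intros Hc. exists (g ord0 zero01). intros t.
  have := Hc 1%N _ _ (const_pf t) (const_pf zero01).
  unfold compP. intros E.
  exact (f_equal (fun h => h ord0 zero01) E).
- intros [y Hy] n phi phi' _ _. unfold compP.
  apply functional_extensionality; intros i; apply functional_extensionality; intros t.
  rewrite !Hy //.
Qed.

Lemma part2 (n : nat) (phi : Ptup n) : inP phi ->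
  (op_surjective compP phi <-> images_cover phi).
Proof.
intros [Hphi Hord]; split.
- intros Hs. apply NNPP; intros Hnc.
  apply not_all_ex_not in Hnc as [y0 Hy0].
  assert (Hne : forall i t, phi i t <> y0).
  { intros i t E; apply Hy0; exists i, t; exact E. }
  destruct y0 as [yv Hyv] eqn:Ey0.
  set gi := fun i : 'I_n => if Rlt_dec yv (proj1_sig (phi i zero01))
                            then proj1_sig (phi i zero01) else 1.
  set b := List.fold_right Rmin 1 (List.map gi (enum 'I_n)).
  assert (Hb : (yv < b)).
  { apply fold_min_gt; [|lra]. intros x Hx. apply List.in_map_iff in Hx as [i [<- _]].
    unfold gi; destruct Rlt_dec; simpl; lra. }
  assert (Hb1 : (b <= 1)).
  { unfold b; clear; induction (List.map gi (enum 'I_n)); simpl; [lra|].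
    eapply Rle_trans; [apply Rmin_r|auto]. }
  assert (Hbi : forall i, (b <= gi i)).
  { intros i; apply fold_min_le, List.in_map, in_In, mem_enum. }
  assert (Key : forall i t, (proj1_sig (phi i t) < yv \/ b <= proj1_sig (phi i t))).
  { intros i t. destruct (Hphi i) as [Hmon Hcont].
    assert (H0t : (proj1_sig zero01 <= proj1_sig t)) by (destruct t; simpl; lra).
    destruct (Rlt_dec yv (proj1_sig (phi i zero01))) as [Hlt|Hge].
    - right. eapply Rle_trans; [apply (Hbi i)|]. unfold gi; destruct Rlt_dec; simpl; [|contradiction].
      apply Hmon; exact H0t.
    - assert (Hv0 : (proj1_sig (phi i zero01) < yv)).
      { destruct (Rtotal_order (proj1_sig (phi i zero01)) yv) as [h|[h|h]]; try lra.
        exfalso; apply (Hne i zero01); apply I01_eq; rewrite h //. }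
      destruct (Rtotal_order (proj1_sig (phi i t)) yv) as [h|[h|h]]; [left; exact h| |].
      + exfalso; apply (Hne i t); apply I01_eq; rewrite h //.
      + exfalso. destruct (Rlt_dec 0 (proj1_sig t)) as [Ht|Ht].
        * destruct (@ivt01 (phi i) zero01 t yv Hcont Ht Hv0 h) as [u Hu].
          apply (Hne i u); apply I01_eq; rewrite Hu //.
        * have := Hmon t zero01 ltac:(simpl; lra). lra. }
  assert (Hy0pos : (0 <= yv)) by lra.
  have E := Hs _ _ id_inP (T_inP b Hy0pos).
  set m := ((yv + b) / 2).
  assert (Hm : (0 <= m < 1)) by (unfold m; lra).
  assert (Heq : (fun _ : 'I_1 => fun x : I01 => x) =
                (fun _ : 'I_1 => fun x : I01 => exist _ _ (T_pf b x Hy0pos) : I01)).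
  { apply E. unfold compP.
    apply functional_extensionality; intros i; apply functional_extensionality; intros t.
    apply I01_eq; simpl. destruct (Key i t) as [h|h]; unfold Tval, Rmin, Rmax;
      repeat destruct Rle_dec; lra. }
  have := f_equal (fun h => proj1_sig (h ord0 (exist _ m Hm))) Heq.
  simpl. unfold Tval, Rmin, Rmax; repeat destruct Rle_dec; unfold m in *; lra.
- intros Hcov theta theta' _ _ E.
  apply functional_extensionality; intros j; rewrite (ord1 j).
  apply functional_extensionality; intros y.
  destruct (Hcov y) as [i [t <-]].
  exact (f_equal (fun h => h i t) E).
Qed.

Theorem mainTheorem3 :
  ((forall g : Ptup 1, inP g -> (op_constant compP g <-> map_constant g)) /\
   (forall (n : nat) (phi : Ptup n), inP phi ->
      (op_surjective compP phi <-> images_cover phi))) /\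
  ((forall g : Ptup 1, inP g -> (op_constant compPrev g <-> map_constant g)) /\
   (forall (n : nat) (phi : Ptup n), inP phi ->
      (op_surjective compPrev phi <-> images_cover phi))).
Proof.
split; split.
- exact part1.
- exact part2.
- exact part1.
- exact part2.
Qed.
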